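(* Let $f:\mathbb{R}^d\to\mathbb{R}$ be differentiable, let $k\in\mathbb{N}$, let $x_0,\dots,x_k\in\mathbb{R}^d$, $B_k\in\mathbb{S}^d$, and $\sigma,\delta>0$. Define $$m_k(s):=\Big\langle \nabla f(x_k)+\frac{1}{k+1}\sum_{i=0}^k(2i+1)\nabla f(x_i),\,s\Big\rangle+\frac12\langle B_ks,s\rangle+\frac{\sigma}{4}\|s\|^4.$$ Suppose $s_k\in\mathbb{R}^d$ satisfies $\|\nabla m_k(s_k)\|\le\delta\|s_k\|$, and set $x_{k+1}:=x_k+s_k$, $r_k:=\nabla f(x_{k+1})-\nabla f(x_k)-B_ks_k$, and $$\bar g_{k+1}:=\frac{1}{(k+1)(k+2)}\Big(\sum_{i=0}^{k}(2i+1)\nabla f(x_i)+(k+1)\nabla f(x_{k+1})\Big).$$ Then $$\big\|(k+2)\bar g_{k+1}+\sigma\|s_k\|^2s_k\big\|\le\|r_k\|+\delta\|s_k\|.$$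
   Context: $\mathbb{S}^d$ denotes the set of real symmetric $d\times d$ matrices; $\|\cdot\|$ is the Euclidean norm. *)

(* Defs.v *)
From HB Require Import structures.
From mathcomp Require Import all_boot all_order all_algebra.
From mathcomp Require Import all_classical all_reals all_analysis.
Set Implicit Arguments. Unset Strict Implicit. Unset Printing Implicit Defensive.
Import Order.TTheory GRing.Theory Num.Theory.
Import numFieldNormedType.Exports.
Local Open Scope ring_scope.

Definition dotp (R : realType) (d : nat) (u v : 'cV[R]_d) : R := (u^T *m v) 0 0.

Definition enorm (R : realType) (d : nat) (v : 'cV[R]_d) : R :=
  Num.sqrt (\sum_(i < d) v i 0 ^+ 2).

Definition grad (R : realType) (d : nat) (f : 'cV[R]_d -> R) (x : 'cV[R]_d)
  : 'cV[R]_d := \col_j ('d f x (delta_mx j 0 : 'cV[R]_d)).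

(* Main.v *)
Require Import Defs.
From HB Require Import structures.
From mathcomp Require Import all_boot all_order all_algebra.
From mathcomp Require Import all_classical all_reals all_analysis.
From mathcomp Require Import ring lra.
Import Order.TTheory GRing.Theory Num.Theory.
Import numFieldNormedType.Exports.
Local Open Scope ring_scope.

Section Helpers.
Context {R : realType} {d : nat}.
Local Notation V := 'cV[R]_d.

Lemma is_diff_coord (x : V) i : is_diff x (fun N : V => N i 0) (fun N : V => N i 0).
Proof.
have @f : {linear V -> R}.
  by exists (fun N : 'M[R]_(_, _) => N i 0); do 2![eexists]; do ?[constructor];
     rewrite ?mxE// => ? *; rewrite ?mxE//; move=> ?; rewrite !mxE.
rewrite (_ : (fun _ => _) = f) //.
apply: DiffDef; first exact/linear_differentiable/coord_continuous.
by rewrite diff_lin //; exact: coord_continuous.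
Qed.

Lemma is_diff_funeq {f g df : V -> R} {x : V} : f = g -> is_diff x f df -> is_diff x g df.
Proof. by move=> ->. Qed.

Lemma is_diff_sum {n} {f df : 'I_n -> V -> R} {x : V} :
  (forall i, is_diff x (f i) (df i)) ->
  is_diff x (fun y => \sum_(i < n) f i y) (fun y => \sum_(i < n) df i y).
Proof.
elim: n f df => [|n IH] f df H.
  apply: (@is_diff_funeq (cst 0)); first by apply/funext => y; rewrite big_ord0.
  apply: (is_diff_eq (is_diff_cst (0:R) x)).
  by apply/funext => y; rewrite big_ord0.
have H1 := IH (fun i => f (widen_ord (leqnSn n) i)) (fun i => df (widen_ord (leqnSn n) i)) (fun i => H _).
have H2 := is_diffD H1 (H ord_max).
have E1 : ((fun y => \sum_(i < n) f (widen_ord (leqnSn n) i) y) + f ord_max)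
   = (fun y => \sum_(i < n.+1) f i y).
  by apply/funext => y; rewrite big_ord_recr.
have E2 : ((fun y => \sum_(i < n) df (widen_ord (leqnSn n) i) y) + df ord_max)
   = (fun y => \sum_(i < n.+1) df i y).
  by apply/funext => y; rewrite big_ord_recr.
exact (is_diff_funeq E1 (is_diff_eq H2 E2)).
Qed.

Lemma is_diff_mul {f g df dg : V -> R} {x : V} :
  is_diff x f df -> is_diff x g dg ->
  is_diff x (fun y => f y * g y) (fun h => f x * dg h + g x * df h).
Proof.
move=> Hf Hg; have H := is_diffM Hf Hg.
apply: (is_diff_funeq _ (is_diff_eq H _)); by apply/funext.
Qed.

Lemma is_diff_scal (c : R) {f df : V -> R} {x : V} :
  is_diff x f df -> is_diff x (fun y => c * f y) (fun h => c * df h).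
Proof.
move=> Hf; have H := is_diffZ c Hf.
apply: (is_diff_funeq _ (is_diff_eq H _)); by apply/funext.
Qed.

Lemma is_diff_sq {f df : V -> R} {x : V} :
  is_diff x f df -> is_diff x (fun y => f y ^+ 2) (fun h => 2 * f x * df h).
Proof.
move=> Hf; have H := is_diffX 1 Hf.
apply: (is_diff_funeq _ (is_diff_eq H _)); apply/funext => y //=.
Qed.

Lemma dotpE (u v : V) : dotp u v = \sum_i u i 0 * v i 0.
Proof. by rewrite /dotp mxE; apply: eq_bigr => i _; rewrite mxE. Qed.

Lemma is_diff_dotp {f g df dg : V -> V} {x : V} :
  (forall i, is_diff x (fun y => f y i 0) (fun h => df h i 0)) ->
  (forall i, is_diff x (fun y => g y i 0) (fun h => dg h i 0)) ->
  is_diff x (fun y => dotp (f y) (g y)) (fun h => dotp (f x) (dg h) + dotp (df h) (g x)).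
Proof.
move=> Hf Hg.
have H := is_diff_sum (fun i => is_diff_mul (Hf i) (Hg i)).
apply: (is_diff_funeq _ (is_diff_eq H _)).
  by apply/funext => y; rewrite dotpE.
apply/funext => h; rewrite !dotpE -big_split /=; apply: eq_bigr => i _.
by rewrite [g x i 0 * _]mulrC.
Qed.

Lemma is_diff_cstc (c : V) (x : V) i :
  is_diff x (fun _ : V => c i 0) (fun h : V => (0 : V) i 0).
Proof.
apply: (is_diff_eq (is_diff_cst (c i 0) x)).
by apply/funext => h; rewrite mxE.
Qed.

Lemma is_diff_mulmx (B : 'M[R]_d) (x : V) i :
  is_diff x (fun y : V => (B *m y) i 0) (fun h : V => (B *m h) i 0).
Proof.
have H := is_diff_sum (fun j => is_diff_scal (B i j) (is_diff_coord x j)).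
apply: (is_diff_funeq _ (is_diff_eq H _)); apply/funext => y; by rewrite mxE.
Qed.


Lemma is_diff_add {f g df dg : V -> R} {x : V} :
  is_diff x f df -> is_diff x g dg ->
  is_diff x (fun y => f y + g y) (fun h => df h + dg h).
Proof.
move=> Hf Hg; have H := is_diffD Hf Hg.
have E1 : (f + g) = (fun y => f y + g y) by apply/funext.
have E2 : (df + dg) = (fun y => df y + dg y) by apply/funext.
exact (is_diff_funeq E1 (is_diff_eq H E2)).
Qed.

Lemma dotpC (u v : V) : dotp u v = dotp v u.
Proof. by rewrite !dotpE; apply: eq_bigr => i _; rewrite mulrC. Qed.

Lemma dotp_ge0 (u : V) : 0 <= dotp u u.
Proof. by rewrite dotpE; apply: sumr_ge0 => i _; rewrite -expr2 sqr_ge0. Qed.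

Lemma enorm_sq (u : V) : enorm u ^+ 2 = dotp u u.
Proof.
rewrite /enorm sqr_sqrtr ?dotpE; last by apply: sumr_ge0 => i _; rewrite sqr_ge0.
by apply: eq_bigr => i _; rewrite expr2.
Qed.

Lemma enorm_ge0 (u : V) : 0 <= enorm u.
Proof. exact: sqrtr_ge0. Qed.

Lemma CS (u v : V) : dotp u v ^+ 2 <= dotp u u * dotp v v.
Proof.
rewrite !dotpE.
set a := fun i => u i 0; set b := fun i => v i 0.
have E : \sum_(i < d) \sum_(j < d) (a i * b j - a j * b i) ^+ 2 =
  2 * ((\sum_i a i * a i) * (\sum_i b i * b i) - (\sum_i a i * b i) ^+ 2).
  transitivity (\sum_(i < d) \sum_(j < d)
      ((a i * a i) * (b j * b j) + (a j * a j) * (b i * b i) - 2 * ((a i * b i) * (a j * b j)))).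
    by apply: eq_bigr => i _; apply: eq_bigr => j _; ring.
  under eq_bigr => i _ do rewrite sumrB big_split /= -mulr_sumr -mulr_sumr -mulr_suml -mulr_sumr.
  rewrite sumrB big_split /= -!mulr_sumr -!mulr_suml.
  rewrite expr2; ring.
have : 0 <= \sum_(i < d) \sum_(j < d) (a i * b j - a j * b i) ^+ 2.
  by apply: sumr_ge0 => i _; apply: sumr_ge0 => j _; apply: sqr_ge0.
rewrite E pmulr_rge0 // subr_ge0 //.
Qed.

Lemma enorm_triangle (u v : V) : enorm (u + v) <= enorm u + enorm v.
Proof.
have Hu := enorm_ge0 u; have Hv := enorm_ge0 v.
rewrite -(ler_pXn2r (n:=2)) ?nnegrE ?addr_ge0 ?enorm_ge0 //.
have -> : enorm (u + v) ^+ 2 = enorm u ^+ 2 + enorm v ^+ 2 + 2 * dotp u v.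
  rewrite !enorm_sq !dotpE -!big_split /= mulr_sumr -big_split /=.
  by apply: eq_bigr => i _; rewrite mxE; ring.
suff : dotp u v <= enorm u * enorm v by move=> h; nra.
have [h|h] := lerP (dotp u v) 0; first by apply: le_trans h _; apply: mulr_ge0.
rewrite -(ler_pXn2r (n:=2)) ?nnegrE ?mulr_ge0 ?(ltW h) // exprMn !enorm_sq.
exact: CS.
Qed.


Lemma dotp_delta (v : V) i : dotp v (delta_mx i 0) = v i 0.
Proof.
rewrite dotpE (bigD1 i) //= big1 => [|j /negbTE nji]; rewrite mxE ?eqxx ?nji /=.
  by rewrite mulr1 addr0.
by rewrite mulr0.
Qed.

Lemma dotp_mulmx (B : 'M[R]_d) (u v : V) : dotp (B *m u) v = dotp u (B^T *m v).
Proof. by rewrite /dotp trmx_mul mulmxA. Qed.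

Lemma dotp0 (v : V) : dotp 0 v = 0.
Proof. by rewrite dotpE big1 // => i _; rewrite mxE mul0r. Qed.

Lemma grad_m (c : V) (B : 'M[R]_d) (hB : B^T = B) (sigma : R) (s : V) :
  grad (fun s' : V => dotp c s' + 1 / 2 * dotp (B *m s') s' + sigma / 4 * enorm s' ^+ 4) s
  = c + B *m s + (sigma * enorm s ^+ 2) *: s.
Proof.
have D1 := is_diff_dotp (f:=fun _ => c) (g:=fun y => y) (df:=fun _ => 0) (dg:=fun h => h)
   (fun i => is_diff_cstc c s i) (fun i => is_diff_coord s i).
have D2 := is_diff_dotp (f:=fun y => B *m y) (g:=fun y => y) (df:=fun h => B *m h) (dg:=fun h => h)
   (fun i => is_diff_mulmx B s i) (fun i => is_diff_coord s i).
have D3 := is_diff_sq (is_diff_dotp (f:=fun y => y) (g:=fun y => y) (df:=fun h => h) (dg:=fun h => h)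
   (fun i => is_diff_coord s i) (fun i => is_diff_coord s i)).
have D := is_diff_add (is_diff_add D1 (is_diff_scal (1/2) D2)) (is_diff_scal (sigma/4) D3).
have EF : (fun y : V => dotp c y + 1 / 2 * dotp (B *m y) y + sigma / 4 * dotp y y ^+ 2)
   = (fun s' : V => dotp c s' + 1 / 2 * dotp (B *m s') s' + sigma / 4 * enorm s' ^+ 4).
  by apply/funext => y; rewrite -enorm_sq -exprM.
have D' := is_diff_funeq EF D.
rewrite /grad (diff_val (is_diff_def := D')).
apply/matrixP => i j; rewrite (ord1 j) !mxE.
rewrite dotp0 !dotp_delta dotp_mulmx hB ![dotp (delta_mx _ _) _]dotpC !dotp_delta -enorm_sq ?mxE.
set S := \sum_j0 _.
by field.
Qed.
End Helpers.
Theorem lemma3p1 (R : realType) (d : nat) (f : 'cV[R]_d -> R)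
  (hf : forall x : 'cV[R]_d, differentiable f x)
  (k : nat) (x : nat -> 'cV[R]_d) (B : 'M[R]_d) (hB : B^T = B)
  (sigma delta : R) (hsigma : 0 < sigma) (hdelta : 0 < delta)
  (s : 'cV[R]_d)
  (hs : enorm (grad (fun s' : 'cV[R]_d =>
            dotp (grad f (x k) + (k.+1%:R)^-1 *:
                    (\sum_(i < k.+1) (2 * i + 1)%:R *: grad f (x i))) s'
            + 1 / 2 * dotp (B *m s') s'
            + sigma / 4 * enorm s' ^+ 4) s)
        <= delta * enorm s) :
  let xk1 := x k + s in
  let r := grad f xk1 - grad f (x k) - B *m s in
  let gbar := ((k.+1 * k.+2)%:R)^-1 *:
      (\sum_(i < k.+1) (2 * i + 1)%:R *: grad f (x i) + k.+1%:R *: grad f xk1) in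
  enorm (k.+2%:R *: gbar + (sigma * enorm s ^+ 2) *: s)
    <= enorm r + delta * enorm s.
Proof.
cbv zeta.
rewrite grad_m // in hs.
move: hs; set Sg := \sum_(i < k.+1) _; move=> hs.
have hk : k.+2%:R * (k.+1 * k.+2)%:R^-1 = k.+1%:R^-1 :> R.
  by rewrite natrM invfM mulrCA mulfV ?mulr1 // pnatr_eq0.
rewrite scalerA hk scalerDr scalerA mulVf ?pnatr_eq0 // scale1r.
move: hs; move: (grad f (x k + s)) (grad f (x k)) (B *m s) (k.+1%:R^-1 *: Sg) ((sigma * enorm s ^+ 2) *: s) => a b c q t hs.
have -> : q + a + t = (b + q + c + t) + (a - b - c).
  by apply/matrixP => i j; rewrite !mxE; ring.
apply: le_trans (enorm_triangle _ _) _.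
by rewrite addrC lerD2l.
Qed.
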